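(* Let $\beta>1$ be fixed. Then the sequence $(\delta(k,\beta))_{k\in\mathbb{N}}$ is strictly increasing and \[ \delta(k,\beta)=(\beta-1)-\frac{\beta}{2(\beta+1)}\frac{1}{k^2}+O\!\left(\frac1{k^3}\right),\qquad k\to+\infty. \]
   Context: $\mathbb{N}=\{0,1,2,\dots\}$. For $t\ge 0$ let $q(t)=\lfloor t+1\rfloor/2$ if $\lfloor t\rfloor$ is odd and $q(t)=t-\lfloor t\rfloor/2$ if $\lfloor t\rfloor$ is even, and $p(t)=t+1-q(t)$. For $\beta\ge1$ let $\hat\sigma(t,\beta)\in(0,1)$ be the unique solution $\sigma$ of $\frac{p(t)\sigma}{\sqrt{1-\sigma^2}}+\frac{q(t)\sigma}{\sqrt{\beta^2-\sigma^2}}=1$, and $l(t,\beta)=\frac{p(t)}{\sqrt{1-\hat\sigma^2}}+\frac{\beta^2q(t)}{\sqrt{\beta^2-\hat\sigma^2}}-t-\sqrt2$. For $k\in\mathbb{N}$, $\delta(k,\beta)=l(2k+2,\beta)-l(2k,\beta)$. *)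

(* Defs.v *)
From Stdlib Require Import Reals Lra ZArith ClassicalEpsilon.
Open Scope R_scope.

Definition floorZ (t : R) : Z := Int_part t.

Definition q (t : R) : R :=
  if Z.odd (floorZ t) then IZR (floorZ (t + 1)) / 2
  else t - IZR (floorZ t) / 2.

Definition p (t : R) : R := t + 1 - q t.

Definition sigma_eq (t beta s : R) : Prop :=
  p t * s / sqrt (1 - s ^ 2) + q t * s / sqrt (beta ^ 2 - s ^ 2) = 1.

Definition sigma_hat (t beta : R) : R :=
  epsilon (inhabits 0) (fun s => 0 < s < 1 /\ sigma_eq t beta s).

Definition l (t beta : R) : R :=
  let s := sigma_hat t beta in
  p t / sqrt (1 - s ^ 2) + beta ^ 2 * q t / sqrt (beta ^ 2 - s ^ 2) - t - sqrt 2.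

Definition delta (k : nat) (beta : R) : R :=
  l (2 * INR k + 2) beta - l (2 * INR k) beta.

(* Main.v *)
Require Import Defs.
From Stdlib Require Import Reals Lra Psatz ZArith ClassicalEpsilon.
From Coquelicot Require Import Coquelicot.
Open Scope R_scope.

Lemma sigma_exists (pp qq b : R) : 1 <= pp -> 0 <= qq -> 1 < b ->
  exists s, 0 < s < 1 /\
   pp * s / sqrt (1 - s ^ 2) + qq * s / sqrt (b ^ 2 - s ^ 2) = 1.
Proof.
  intros Hp Hq Hb.
  set (f := fun s => pp * s / sqrt (1 - s ^ 2) + qq * s / sqrt (b ^ 2 - s ^ 2) - 1).
  assert (Hc : forall a, 0 <= a <= 4/5 -> continuity_pt f a).
  { intros a Ha. apply continuity_pt_filterlim. apply (@ex_derive_continuous R_AbsRing R_NormedModule).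
    unfold f. auto_derive. repeat split.
    - nra.
    - apply Rgt_not_eq, sqrt_lt_R0. nra.
    - nra.
    - apply Rgt_not_eq, sqrt_lt_R0. nra. }
  assert (Hs : sqrt (1 - (4/5)^2) = 3/5).
  { replace (1 - (4/5)^2) with ((3/5)^2) by field. apply sqrt_pow2. lra. }
  assert (Hf0 : f 0 < 0). { unfold f. unfold Rdiv. rewrite !Rmult_0_r, !Rmult_0_l. lra. }
  assert (Hf1 : 0 < f (4/5)).
  { unfold f. rewrite Hs.
    assert (0 <= qq * (4/5) / sqrt (b ^ 2 - (4/5)^2)).
    { apply Rdiv_le_0_compat. nra. apply sqrt_lt_R0. nra. }
    assert (pp * (4/5) / (3/5) = pp * 4 / 3) by field. lra. }
  destruct (Ranalysis5.IVT_interv f 0 (4/5) Hc ltac:(lra) Hf0 Hf1) as [z [Hz Hfz]].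
  exists z. assert (z <> 0). { intro; subst; lra. }
  split. lra. unfold f in Hfz. lra.
Qed.
Lemma floor_even (n : nat) : floorZ (2 * INR n) = (2 * Z.of_nat n)%Z.
Proof.
  unfold floorZ. replace (2 * INR n) with (INR (2 * n)).
  rewrite Int_part_INR. lia. rewrite mult_INR. simpl. ring.
Qed.

Lemma q_even (n : nat) : q (2 * INR n) = INR n.
Proof.
  unfold q. rewrite floor_even.
  replace (Z.odd (2 * Z.of_nat n)) with false.
  rewrite mult_IZR, <- INR_IZR_INZ. simpl. field.
  rewrite Z.odd_mul. reflexivity.
Qed.

Lemma p_even (n : nat) : p (2 * INR n) = INR n + 1.
Proof. unfold p. rewrite q_even. ring. Qed.
Lemma arith (b K s0 s1 d : R) : 1 < b -> 2 <= K -> 0 < s0 -> 0 < s1 ->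
  K * s0 * (b + 1) <= b -> (K + 1) * s1 * (b + 1) <= b ->
  1 <= s1 * (1 + s1 ^ 2) * ((K + 2) + (K + 1) / b) ->
  b - 1 - s0 ^ 2 * (1 + 1 / b) / 2 - s0 ^ 4 <= d ->
  d <= b - 1 - s1 ^ 2 * (1 + 1 / b) / 2 ->
  Rabs (d - ((b - 1) - b / (2 * (b + 1)) * (1 / K ^ 2))) <= 35 / K ^ 3.
Proof.
  intros Hb HK H0 H1 F0 F1 F2 Dl Du.
  set (y := / K).
  assert (Hy : 0 < y <= 1/2). { unfold y. split. apply Rinv_0_lt_compat; lra.
    apply Rle_trans with (/2). apply Rinv_le_contravar; lra. lra. }
  assert (HKy : K * y = 1). { unfold y. field. lra. }
  assert (E1 : 1 / K ^ 2 = y ^ 2). { unfold y. field. lra. }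
  assert (E2 : 35 / K ^ 3 = 35 * y ^ 3). { unfold y. field. lra. }
  rewrite E1, E2.
  assert (Hs0 : s0 * (b + 1) <= b * y).
  { replace (s0 * (b+1)) with (K * s0 * (b+1) * y). nra.
    replace (K * s0 * (b+1) * y) with ((K*y) * s0 * (b+1)) by ring. rewrite HKy. ring. }
  set (w := (b + 1) * s1 / b).
  assert (Hw : s1 = b * w / (b+1)). { unfold w. field. lra. }
  assert (Hwy : w <= y).
  { unfold w. apply Rmult_le_reg_r with b. lra. unfold Rdiv. rewrite Rmult_assoc, Rinv_l by lra.
    assert (K * s1 * (b+1) <= b) by nra.
    replace ((b+1) * s1) with (K * s1 * (b+1) * y). nra.
    replace (K * s1 * (b+1) * y) with ((K*y) * s1 * (b+1)) by ring. rewrite HKy. ring. }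
  assert (Hw0 : 0 < w). { unfold w. apply Rdiv_lt_0_compat; nra. }
  assert (Hs1w : s1 <= w). { rewrite Hw. apply Rmult_le_reg_r with (b+1). lra.
    unfold Rdiv. rewrite Rmult_assoc, Rinv_l by lra. nra. }
  assert (F3 : (K + 2) + (K + 1) / b <= (K + 2) * (b + 1) / b).
  { apply Rmult_le_reg_r with b. lra. unfold Rdiv. rewrite !Rmult_plus_distr_r.
    rewrite !Rmult_assoc, !Rinv_l by lra. nra. }
  assert (F4 : 1 <= w * (1 + y ^ 2) * (K + 2)).
  { assert (s1 ^ 2 <= y ^ 2) by nra.
    assert (H3 : 1 <= s1 * (1 + s1^2) * ((K+2) * (b+1) / b)).
    { apply Rle_trans with (1 := F2). apply Rmult_le_compat_l. nra. exact F3. }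
    replace (s1 * (1 + s1^2) * ((K+2) * (b+1) / b)) with (w * (1 + s1^2) * (K+2)) in H3
      by (unfold w; field; lra).
    apply Rle_trans with (1 := H3). apply Rmult_le_compat_r. lra.
    apply Rmult_le_compat_l; lra. }
  assert (F5 : y <= w * (1 + 4 * y)).
  { assert (H : y <= w * (1 + y^2) * (K + 2) * y) by nra.
    replace (w * (1 + y^2) * (K + 2) * y) with (w * (1 + y^2) * (K*y + 2*y)) in H by ring.
    rewrite HKy in H. nra. }
  assert (F6 : y ^ 2 - 8 * y ^ 3 <= w ^ 2).
  { assert (y^2 <= w^2 * (1 + 4*y)^2) by nra. nra. }
  assert (Hbb : 0 < b / (2 * (b + 1)) < 1).
  { split. apply Rdiv_lt_0_compat; lra. apply Rmult_lt_reg_r with (2*(b+1)). lra.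
    unfold Rdiv. rewrite Rmult_assoc, Rinv_l by lra. lra. }
  assert (U : d - (b - 1 - b / (2 * (b + 1)) * y ^ 2) <= 35 * y ^ 3).
  { assert (s1 ^ 2 * (1 + 1/b) / 2 = b / (2 * (b+1)) * w ^ 2).
    { rewrite Hw. field. lra. }
    assert (b / (2 * (b+1)) * (y^2 - w^2) <= 8 * y^3).
    { assert (0 <= y^2 - w^2) by nra. nra. }
    nra. }
  assert (L : - (35 * y ^ 3) <= d - (b - 1 - b / (2 * (b + 1)) * y ^ 2)).
  { assert (s0 ^ 2 * (1 + 1/b) / 2 = b / (2 * (b+1)) * ((b+1) * s0 / b) ^ 2).
    { field. lra. }
    assert ((b+1) * s0 / b <= y).
    { apply Rmult_le_reg_r with b. lra. unfold Rdiv. rewrite Rmult_assoc, Rinv_l by lra. nra. }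
    assert (0 < (b+1) * s0 / b). { apply Rdiv_lt_0_compat; nra. }
    assert (s0 <= y) by nra.
    assert (s0 ^ 4 <= y ^ 3). { assert (s0^4 <= y^4). { apply pow_incr; lra. } nra. }
    assert (((b+1) * s0 / b) ^ 2 <= y ^ 2) by (apply pow_incr; lra).
    nra. }
  apply Rabs_le. lra.
Qed.
Lemma sqrt_ge_aux (w y : R) : 0 <= y -> w * w <= y -> w <= sqrt y.
Proof. intros Hy H. destruct (Rle_dec w 0). pose proof (sqrt_pos y); lra.
  rewrite <- (sqrt_square w) by lra. apply sqrt_le_1_alt. lra. Qed.

Lemma sqrt_le_aux (w y : R) : 0 <= w -> y <= w * w -> sqrt y <= w.
Proof. intros Hw H. rewrite <- (sqrt_square w) by lra. apply sqrt_le_1_alt. lra. Qed.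

Definition Bf (b s : R) := sqrt (1 - s ^ 2) + sqrt (b ^ 2 - s ^ 2).

Lemma Bf_bounds (b s : R) : 1 < b -> 0 <= s -> s ^ 2 <= 1 ->
  b - 1 - s ^ 2 * (1 + 1 / b) / 2 - s ^ 4 <= Bf b s - 2 /\
  Bf b s - 2 <= b - 1 - s ^ 2 * (1 + 1 / b) / 2.
Proof.
  intros Hb Hs Hs1. unfold Bf.
  assert (s ^ 4 = s^2 * s^2) by ring. rewrite H.
  assert (Hx : 0 <= s^2) by nra. revert Hx Hs1. generalize (s ^ 2). intros x Hx Hs1.
  assert (Hib : 0 < 1 / b < 1).
  { split. apply Rdiv_lt_0_compat; lra. apply Rmult_lt_reg_r with b. lra.
    unfold Rdiv. rewrite Rmult_1_l, Rinv_l by lra. lra. }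
  assert (Hbi : b * (1 / b) = 1) by (field; lra).
  assert (A1 : sqrt (1 - x) <= 1 - x / 2).
  { apply sqrt_le_aux. lra. nra. }
  assert (A2 : 1 - x / 2 - x * x / 2 <= sqrt (1 - x)).
  { apply sqrt_ge_aux. lra. assert (0 <= x * x * x) by (apply Rmult_le_pos; nra). nra. }
  assert (A3 : sqrt (b ^ 2 - x) <= b - x * (1/b) / 2).
  { apply sqrt_le_aux. nra. assert (0 <= (x * (1/b) / 2)^2) by nra. nra. }
  assert (A4 : b - x * (1/b) / 2 - x * x / 2 <= sqrt (b ^ 2 - x)).
  { apply sqrt_ge_aux. nra.
    assert (x * (1/b) / 2 + x * x / 2 <= x) by nra.
    assert (0 <= x * (1/b) / 2 + x * x / 2) by nra.
    assert ((x * (1/b) / 2 + x * x / 2)^2 <= x * x) by nra.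
    nra. }
  split; nra.
Qed.
Definition G (pp qq b s : R) := s + pp * sqrt (1 - s ^ 2) + qq * sqrt (b ^ 2 - s ^ 2).

Lemma tangent (c sg s : R) : 1 <= c -> 0 < sg < 1 -> 0 < s < 1 ->
  sqrt (c - s ^ 2) <= sqrt (c - sg ^ 2) - sg * (s - sg) / sqrt (c - sg ^ 2) /\
  (s <> sg -> sqrt (c - s ^ 2) < sqrt (c - sg ^ 2) - sg * (s - sg) / sqrt (c - sg ^ 2)).
Proof.
  intros Hc Hsg Hs.
  assert (Hu : 0 < sqrt (c - sg ^ 2)) by (apply sqrt_lt_R0; nra).
  assert (Huu : sqrt (c - sg ^ 2) * sqrt (c - sg ^ 2) = c - sg ^ 2) by (apply sqrt_sqrt; nra).
  assert (Hv : 0 <= sqrt (c - s ^ 2)) by apply sqrt_pos.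
  assert (Hvv : sqrt (c - s ^ 2) * sqrt (c - s ^ 2) = c - s ^ 2) by (apply sqrt_sqrt; nra).
  set (u := sqrt (c - sg ^ 2)) in *. set (v := sqrt (c - s ^ 2)) in *. clearbody u v.
  assert (E : u - sg * (s - sg) / u = (c - sg * s) / u).
  { replace (c - sg*s) with (u*u - sg*(s-sg)) by (rewrite Huu; ring). field; lra. }
  rewrite E.
  assert (Hpos : 0 < c - sg * s) by nra.
  assert (Key : (u * v) * (u * v) = (c - sg * s) * (c - sg * s) - c * (s - sg) ^ 2).
  { replace ((u*v)*(u*v)) with ((u*u)*(v*v)) by ring. rewrite Huu, Hvv. ring. }
  assert (Huv : 0 <= u * v) by nra.
  split.
  - apply Rmult_le_reg_l with u. lra. unfold Rdiv. rewrite <- Rmult_assoc, (Rmult_comm u (c - sg*s)),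
      Rmult_assoc, Rinv_r by lra. rewrite Rmult_1_r.
    assert (0 <= c * (s - sg) ^ 2) by (apply Rmult_le_pos; [lra | apply pow2_ge_0]). nra.
  - intro Hne. apply Rmult_lt_reg_l with u. lra. unfold Rdiv. rewrite <- Rmult_assoc, (Rmult_comm u (c - sg*s)),
      Rmult_assoc, Rinv_r by lra. rewrite Rmult_1_r.
    assert (0 < (s - sg) * (s - sg)) by (apply Rsqr_pos_lt; lra).
    assert (0 < c * (s - sg) ^ 2) by (apply Rmult_lt_0_compat; nra). nra.
Qed.

Lemma Gmax (pp qq b sg s : R) : 0 < pp -> 0 <= qq -> 1 < b -> 0 < sg < 1 -> 0 < s < 1 ->
  pp * sg / sqrt (1 - sg ^ 2) + qq * sg / sqrt (b ^ 2 - sg ^ 2) = 1 ->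
  G pp qq b s <= G pp qq b sg /\ (s <> sg -> G pp qq b s < G pp qq b sg).
Proof.
  intros Hp Hq Hb Hsg Hs Heq.
  assert (Hb2 : 1 <= b ^ 2) by nra.
  destruct (tangent 1 sg s ltac:(lra) Hsg Hs) as [T1 T1s].
  destruct (tangent (b ^ 2) sg s Hb2 Hsg Hs) as [T2 T2s].
  assert (Hu1 : 0 < sqrt (1 - sg ^ 2)) by (apply sqrt_lt_R0; nra).
  assert (Hu2 : 0 < sqrt (b ^ 2 - sg ^ 2)) by (apply sqrt_lt_R0; nra).
  unfold G.
  set (u1 := sqrt (1 - sg ^ 2)) in *. set (u2 := sqrt (b ^ 2 - sg ^ 2)) in *.
  set (v1 := sqrt (1 - s ^ 2)) in *. set (v2 := sqrt (b ^ 2 - s ^ 2)) in *.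
  clearbody u1 u2 v1 v2.
  assert (E : pp * (sg * (s - sg) / u1) + qq * (sg * (s - sg) / u2) = (s - sg) *
     (pp * sg / u1 + qq * sg / u2)) by (field; lra).
  rewrite Heq in E.
  split.
  - assert (pp * v1 <= pp * (u1 - sg * (s - sg) / u1)) by (apply Rmult_le_compat_l; lra).
    assert (qq * v2 <= qq * (u2 - sg * (s - sg) / u2)) by (apply Rmult_le_compat_l; lra).
    nra.
  - intro Hne. specialize (T1s Hne).
    assert (pp * v1 < pp * (u1 - sg * (s - sg) / u1)) by (apply Rmult_lt_compat_l; lra).
    assert (qq * v2 <= qq * (u2 - sg * (s - sg) / u2)) by (apply Rmult_le_compat_l; lra).
    nra.
Qed.

Definition sig (n : nat) (b : R) := sigma_hat (2 * INR n) b.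

Lemma sig_spec (n : nat) (b : R) : 1 < b -> 0 < sig n b < 1 /\
  (INR n + 1) * sig n b / sqrt (1 - sig n b ^ 2) + INR n * sig n b / sqrt (b ^ 2 - sig n b ^ 2) = 1.
Proof.
  intros Hb. unfold sig, sigma_hat.
  set (P := fun s => 0 < s < 1 /\ sigma_eq (2 * INR n) b s).
  assert (H : P (epsilon (inhabits 0) P)).
  { apply epsilon_spec. destruct (sigma_exists (INR n + 1) (INR n) b) as [s Hs].
    pose proof (pos_INR n); lra. apply pos_INR. exact Hb.
    exists s. unfold P, sigma_eq. rewrite p_even, q_even. exact Hs. }
  destruct H as [H1 H2]. unfold sigma_eq in H2. rewrite p_even, q_even in H2. split; assumption.
Qed.

Definition m (n : nat) (b : R) := G (INR n + 1) (INR n) b (sig n b) - 2 * INR n.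

Lemma l_even (n : nat) (b : R) : 1 < b -> l (2 * INR n) b = m n b - sqrt 2.
Proof.
  intros Hb. unfold l, m. cbv zeta. rewrite p_even, q_even.
  change (sigma_hat (2 * INR n) b) with (sig n b).
  destruct (sig_spec n b Hb) as [Hs Heq].
  unfold G.
  assert (Hu : 0 < sqrt (1 - sig n b ^ 2)) by (apply sqrt_lt_R0; nra).
  assert (Huu : sqrt (1 - sig n b ^ 2) * sqrt (1 - sig n b ^ 2) = 1 - sig n b ^ 2) by (apply sqrt_sqrt; nra).
  assert (Hv : 0 < sqrt (b ^ 2 - sig n b ^ 2)) by (apply sqrt_lt_R0; nra).
  assert (Hvv : sqrt (b ^ 2 - sig n b ^ 2) * sqrt (b ^ 2 - sig n b ^ 2) = b ^ 2 - sig n b ^ 2) by (apply sqrt_sqrt; nra).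
  set (s := sig n b) in *. set (u := sqrt (1 - s ^ 2)) in *. set (v := sqrt (b ^ 2 - s ^ 2)) in *.
  clearbody s u v.
  assert (E1 : (INR n + 1) / u = (INR n + 1) * u + s * ((INR n + 1) * s / u)).
  { replace ((INR n + 1) * u) with ((INR n + 1) * (u * u) / u) by (field; lra). rewrite Huu. field; lra. }
  assert (E2 : b ^ 2 * INR n / v = INR n * v + s * (INR n * s / v)).
  { replace (INR n * v) with (INR n * (v * v) / v) by (field; lra). rewrite Hvv. field; lra. }
  rewrite E1, E2.
  assert (s * ((INR n + 1) * s / u) + s * (INR n * s / v) = s) by (rewrite <- Rmult_plus_distr_l, Heq; ring).
  lra.
Qed.

Lemma delta_m (k : nat) (b : R) : 1 < b -> delta k b = m (S k) b - m k b.
Proof.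
  intros Hb. unfold delta. replace (2 * INR k + 2) with (2 * INR (S k)) by (rewrite S_INR; ring).
  rewrite !l_even by exact Hb. ring.
Qed.

Lemma G_lin (x b s : R) : G (x + 1) x b s = s + sqrt (1 - s ^ 2) + x * Bf b s.
Proof. unfold G, Bf. ring. Qed.

Lemma m_lin (n : nat) (b : R) : m n b = sig n b + sqrt (1 - sig n b ^ 2) + INR n * (Bf b (sig n b) - 2).
Proof. unfold m. rewrite G_lin. ring. Qed.

Lemma m_ge (n : nat) (b s : R) : 1 < b -> 0 < s < 1 ->
  s + sqrt (1 - s ^ 2) + INR n * (Bf b s - 2) <= m n b /\
  (s <> sig n b -> s + sqrt (1 - s ^ 2) + INR n * (Bf b s - 2) < m n b).
Proof.
  intros Hb Hs. destruct (sig_spec n b Hb) as [Hsg Heq].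
  pose proof (pos_INR n).
  destruct (Gmax (INR n + 1) (INR n) b (sig n b) s ltac:(lra) H Hb Hsg Hs Heq) as [A1 A2].
  unfold m. rewrite G_lin in A1, A2. split.
  - lra.
  - intro Hne. specialize (A2 Hne). lra.
Qed.

Lemma sig_ne (k : nat) (b : R) : 1 < b -> sig (S k) b <> sig k b.
Proof.
  intros Hb Heq. destruct (sig_spec k b Hb) as [Hs1 E1]. destruct (sig_spec (S k) b Hb) as [_ E2].
  rewrite Heq, S_INR in E2. set (s := sig k b) in *.
  assert (Hu : 0 < sqrt (1 - s ^ 2)) by (apply sqrt_lt_R0; nra).
  assert (Hv : 0 < sqrt (b ^ 2 - s ^ 2)) by (apply sqrt_lt_R0; nra).
  clearbody s. set (u := sqrt (1 - s ^ 2)) in *. set (v := sqrt (b ^ 2 - s ^ 2)) in *. clearbody u v.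
  assert (E : s / u + s / v = 0).
  { replace (s / u + s / v) with ((INR k + 1 + 1) * s / u + (INR k + 1) * s / v -
       ((INR k + 1) * s / u + INR k * s / v)) by (field; lra). lra. }
  assert (0 < s / u) by (apply Rdiv_lt_0_compat; lra).
  assert (0 < s / v) by (apply Rdiv_lt_0_compat; lra). lra.
Qed.

Lemma F1 (n : nat) (b : R) : 1 < b -> INR n * sig n b * (b + 1) <= b.
Proof.
  intros Hb. destruct (sig_spec n b Hb) as [Hs E]. pose proof (pos_INR n) as Hn.
  set (s := sig n b) in *.
  assert (Hu : 0 < sqrt (1 - s ^ 2)) by (apply sqrt_lt_R0; nra).
  assert (Hv : 0 < sqrt (b ^ 2 - s ^ 2)) by (apply sqrt_lt_R0; nra).
  assert (Hu1 : sqrt (1 - s ^ 2) <= 1) by (apply sqrt_le_aux; nra).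
  assert (Hv1 : sqrt (b ^ 2 - s ^ 2) <= b) by (apply sqrt_le_aux; nra).
  clearbody s. set (u := sqrt (1 - s ^ 2)) in *. set (v := sqrt (b ^ 2 - s ^ 2)) in *. clearbody u v.
  set (A := s / u). set (C := s / v).
  assert (HA : A * u = s) by (unfold A; field; lra).
  assert (HC : C * v = s) by (unfold C; field; lra).
  assert (HA0 : 0 <= A) by (unfold A; apply Rlt_le, Rdiv_lt_0_compat; lra).
  assert (HC0 : 0 <= C) by (unfold C; apply Rlt_le, Rdiv_lt_0_compat; lra).
  assert (E' : (INR n + 1) * A + INR n * C = 1).
  { replace ((INR n + 1) * A + INR n * C) with ((INR n + 1) * s / u + INR n * s / v) by (unfold A, C; field; lra). exact E. }
  clearbody A C.
  assert (s <= A) by nra. assert (s <= C * b) by nra.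
  assert (0 <= INR n * (A - s) * b) by (apply Rmult_le_pos; [apply Rmult_le_pos|]; lra).
  assert (0 <= INR n * (C * b - s)) by (apply Rmult_le_pos; lra).
  assert (0 <= b * A) by (apply Rmult_le_pos; lra).
  assert (b = b * ((INR n + 1) * A + INR n * C)) by (rewrite E'; ring).
  nra.
Qed.

Lemma F2 (n : nat) (b : R) : 1 < b -> sig n b ^ 2 <= 1/2 ->
  1 <= sig n b * (1 + sig n b ^ 2) * ((INR n + 1) + INR n / b).
Proof.
  intros Hb Hx. destruct (sig_spec n b Hb) as [Hs E]. pose proof (pos_INR n) as Hn.
  set (s := sig n b) in *.
  assert (Hu : 0 < sqrt (1 - s ^ 2)) by (apply sqrt_lt_R0; nra).
  assert (Hv : 0 < sqrt (b ^ 2 - s ^ 2)) by (apply sqrt_lt_R0; nra).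
  assert (Huu : sqrt (1 - s ^ 2) * sqrt (1 - s ^ 2) = 1 - s ^ 2) by (apply sqrt_sqrt; nra).
  assert (Hvv : sqrt (b ^ 2 - s ^ 2) * sqrt (b ^ 2 - s ^ 2) = b ^ 2 - s ^ 2) by (apply sqrt_sqrt; nra).
  clearbody s. set (u := sqrt (1 - s ^ 2)) in *. set (v := sqrt (b ^ 2 - s ^ 2)) in *. clearbody u v.
  set (A := s / u). set (C := s / v).
  assert (HA : A * u = s) by (unfold A; field; lra).
  assert (HC : C * v = s) by (unfold C; field; lra).
  assert (HA0 : 0 <= A) by (unfold A; apply Rlt_le, Rdiv_lt_0_compat; lra).
  assert (HC0 : 0 <= C) by (unfold C; apply Rlt_le, Rdiv_lt_0_compat; lra).
  assert (E' : (INR n + 1) * A + INR n * C = 1).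
  { replace ((INR n + 1) * A + INR n * C) with ((INR n + 1) * s / u + INR n * s / v) by (unfold A, C; field; lra). exact E. }
  clearbody A C.
  set (x := s ^ 2) in *. assert (Hx0 : 0 <= x) by (unfold x; nra). clearbody x.
  assert (U1 : 1 <= u * (1 + x)).
  { assert ((u * (1 + x)) * (u * (1 + x)) = (1 - x) * (1 + x) ^ 2) by (replace ((u * (1 + x)) * (u * (1 + x))) with ((u*u) * (1+x)^2) by ring; rewrite Huu; ring).
    assert (0 <= x * (1 - x - x ^ 2)) by (apply Rmult_le_pos; nra).
    assert (1 <= (1 - x) * (1 + x) ^ 2) by nra.
    assert (0 <= u * (1 + x)) by (apply Rmult_le_pos; lra). nra. }
  assert (V1 : b <= v * (1 + x)).
  { assert ((v * (1 + x)) * (v * (1 + x)) = (b ^ 2 - x) * (1 + x) ^ 2) by (replace ((v * (1 + x)) * (v * (1 + x))) with ((v*v) * (1+x)^2) by ring; rewrite Hvv; ring).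
    assert (0 <= x * (b ^ 2 - 1)) by (apply Rmult_le_pos; nra).
    assert (b ^ 2 * (1 - x) <= b ^ 2 - x) by nra.
    assert (0 <= x * (1 - x - x ^ 2)) by (apply Rmult_le_pos; nra).
    assert (1 <= (1 - x) * (1 + x) ^ 2) by nra.
    assert (0 <= (1 + x) ^ 2 * (b ^ 2 - x - b ^ 2 * (1 - x))) by (apply Rmult_le_pos; nra).
    assert (0 <= b ^ 2 * ((1 - x) * (1 + x) ^ 2 - 1)) by (apply Rmult_le_pos; nra).
    assert (b ^ 2 <= (b ^ 2 - x) * (1 + x) ^ 2) by nra.
    assert (0 <= v * (1 + x)) by (apply Rmult_le_pos; lra). nra. }
  assert (A1 : A <= s * (1 + x)) by nra.
  assert (C1 : C * b <= s * (1 + x)) by nra.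
  assert (C2 : INR n * C <= INR n * (s * (1 + x)) / b).
  { apply Rmult_le_reg_r with b. lra.
    replace (INR n * (s * (1 + x)) / b * b) with (INR n * (s * (1 + x))) by (field; lra).
    assert (0 <= INR n * (s * (1 + x) - C * b)) by (apply Rmult_le_pos; lra). nra. }
  assert (E3 : s * (1 + x) * ((INR n + 1) + INR n / b) = (INR n + 1) * (s * (1 + x)) + INR n * (s * (1 + x)) / b)
    by (field; lra).
  rewrite E3. nra.
Qed.

Theorem theorem3p8 (beta : R) (hbeta : 1 < beta) :
  (forall k : nat, delta k beta < delta (S k) beta) /\
  (exists C : R, exists K : nat, forall k : nat, (K <= k)%nat ->
     Rabs (delta k beta - ((beta - 1) - beta / (2 * (beta + 1)) * (1 / INR k ^ 2)))
       <= C / INR k ^ 3).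
Proof.
  split.
  - intro k. rewrite !delta_m by exact hbeta.
    set (s := sig (S k) beta).
    destruct (sig_spec (S k) beta hbeta) as [Hs _]. fold s in Hs.
    destruct (m_ge k beta s hbeta Hs) as [_ A]. specialize (A (sig_ne k beta hbeta)).
    destruct (m_ge (S (S k)) beta s hbeta Hs) as [B _].
    rewrite (m_lin (S k)) in *. fold s. rewrite !S_INR in *. lra.
  - exists 35, 2%nat. intros k Hk.
    assert (HK : 2 <= INR k) by (apply le_INR in Hk; simpl in Hk; lra).
    destruct (sig_spec k beta hbeta) as [Hs0 _].
    destruct (sig_spec (S k) beta hbeta) as [Hs1 _].
    pose proof (F1 k beta hbeta) as G0.
    pose proof (F1 (S k) beta hbeta) as G1. rewrite S_INR in G1.
    assert (Hx1 : sig (S k) beta ^ 2 <= 1/2).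
    { assert (sig (S k) beta * 3 * (beta + 1) <= beta) by nra. nra. }
    pose proof (F2 (S k) beta hbeta Hx1) as G2. rewrite S_INR in G2.
    rewrite delta_m by exact hbeta.
    destruct (m_ge (S k) beta (sig k beta) hbeta Hs0) as [L _].
    destruct (m_ge k beta (sig (S k) beta) hbeta Hs1) as [U _].
    rewrite m_lin in L, U. rewrite S_INR in L.
    destruct (Bf_bounds beta (sig k beta) hbeta ltac:(lra) ltac:(nra)) as [B0 _].
    destruct (Bf_bounds beta (sig (S k) beta) hbeta ltac:(lra) ltac:(nra)) as [_ B1].
    rewrite !m_lin, S_INR.
    apply (arith beta (INR k) (sig k beta) (sig (S k) beta)); try lra.
Qed.
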